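(* Consider the Markov chain $\mathcal{G}$ described in the context, with parameters $r\ge1$, $p_c,p_1,\ldots,p_r\in[0,1]$. Let $s$ be any state of the form $s_i^\alpha$ or $c_i^\alpha$, and write $p_{\max}=\max\{p_1,\ldots,p_r\}$. If $p_c<1$ and $\eta:=r\cdot p_{\max}\cdot p_c<1$, then $\mathbb{E}[N(s)]$ is finite.
   Context: Fix an integer $r\ge 1$ and probabilities $p_c,p_1,\ldots,p_r\in[0,1]$. Words $\alpha\in\{1,\ldots,r\}^*$ (finite sequences, $\varepsilon$ the empty word, $\alpha\cdot i$ concatenation, $r^k$ the word of $k$ letters $r$) are called blocks. The Markov chain $\mathcal{G}$ has the countable state space $\{s_i^\alpha, c_i^\alpha : 1\le i\le r,\ \alpha\in\{1,\ldots,r\}^*\}\cup\{\sharp,\bot\}$, initial state $\sharp$, and the following transition probabilities (all unlisted transitions have probability $0$): $p(\sharp,s_1^\varepsilon)=p_c$, $p(\sharp,\bot)=1-p_c$; $p(s_i^\alpha,c_i^\alpha)=p_i$ for $1\le i\le r$; $p(s_i^\alpha,s_{i+1}^\alpha)=1-p_i$ for $1\le i<r$; $p(c_i^\alpha,s_1^{\alpha\cdot i})=p_c$ for $1\le i\le r$; $p(c_i^\alpha,s_{i+1}^\alpha)=1-p_c$ for $1\le i<r$; for every word of the form $\gamma=\beta\cdot i\cdot r^k$ with $1\le i<r$, $k\ge 0$: $p(s_r^{\gamma},s_{i+1}^\beta)=1-p_r$ and $p(c_r^{\gamma},s_{i+1}^\beta)=1-p_c$; for every $\gamma\in r^*$ (including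 $\varepsilon$): $p(s_r^\gamma,\bot)=1-p_r$, $p(c_r^\gamma,\bot)=1-p_c$; and $p(\bot,\bot)=1$. The block of $s_i^\alpha$ and of $c_i^\alpha$ is $\alpha$. For a block $\alpha$ let $E_\alpha=\{s_j^\beta : 1\le j\le r,\ \beta\text{ a proper prefix of }\alpha\}\cup\{\bot\}$. For a state $s$ with block $\alpha$, $N(s)$ is the hitting time $\inf\{n\ge 0: X_n\in E_\alpha\}$ of $E_\alpha$ for the chain $(X_n)$ started at $X_0=s$, i.e. the number of states visited from $s$ (including those in deeper blocks) before the block of $s$ is left upward. *)

(* Defs.v *)
From mathcomp Require Import all_boot all_order all_algebra.
From mathcomp Require Import all_classical all_reals all_analysis.
Set Implicit Arguments. Unset Strict Implicit. Unset Printing Implicit Defensive.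
Import Order.TTheory GRing.Theory Num.Theory.
Local Open Scope ring_scope.

(* States of the chain G: s_i^alpha, c_i^alpha, sharp, bot.
   Letters of blocks and indices are natural numbers; valid ones are in 1..r. *)
Inductive state : Type :=
| St : nat -> seq nat -> state
| Ct : nat -> seq nat -> state
| Sharp : state
| Bot : state.

(* The target of the "leave to the right" transitions out of s_r^gamma / c_r^gamma:
   if gamma = beta . i . r^k with i < r (i.e. i <> r) the target is s_{i+1}^beta,
   if gamma is in r^* the target is bot.  Argument b is rev gamma. *)
Fixpoint exit_rev (r : nat) (b : seq nat) : state :=
  match b with
  | [::] => Bot
  | j :: b' => if j == r then exit_rev r b' else St j.+1 (rev b')
  end.

Definition exit_state (r : nat) (gamma : seq nat) : state := exit_rev r (rev gamma).

Definition valid_block (r : nat) (a : seq nat) : bool := all (fun j => 0 < j <= r)%N a.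

(* The list of all transitions (target, probability) out of a state; every
   transition not listed has probability 0.  Transitions are listed only for
   valid states (indices in 1..r, blocks over {1..r}), exactly as in the paper. *)
Definition succ {R : realType} (r : nat) (pc : R) (ps : nat -> R) (x : state)
  : seq (state * R) :=
  match x with
  | Sharp => [:: (St 1 [::], pc); (Bot, 1 - pc)]
  | Bot => [:: (Bot, 1)]
  | St i a =>
      if (0 < i <= r)%N && valid_block r a then
        if (i < r)%N then [:: (Ct i a, ps i); (St i.+1 a, 1 - ps i)]
        else [:: (Ct i a, ps i); (exit_state r a, 1 - ps i)]
      else [::]
  | Ct i a =>
      if (0 < i <= r)%N && valid_block r a then
        if (i < r)%N then [:: (St 1 (rcons a i), pc); (St i.+1 a, 1 - pc)]
        else [:: (St 1 (rcons a i), pc); (exit_state r a, 1 - pc)]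
      else [::]
  end.

Definition block (x : state) : seq nat :=
  match x with St _ a | Ct _ a => a | _ => [::] end.

Definition is_block_state (r : nat) (x : state) : bool :=
  match x with
  | St i a | Ct i a => (0 < i <= r)%N && valid_block r a
  | _ => false
  end.

Definition in_E (r : nat) (alpha : seq nat) (x : state) : bool :=
  match x with
  | St j beta => (0 < j <= r)%N && prefix beta alpha && (size beta < size alpha)%N
  | Bot => true
  | _ => false
  end.

(* surv E n x = P_x(X_0, ..., X_n all outside E) = P_x(N > n) where N is the
   hitting time of E (defined by first-step recursion). *)
Fixpoint surv {R : realType} (r : nat) (pc : R) (ps : nat -> R)
  (E : state -> bool) (n : nat) (x : state) : R :=
  if E x then 0 else
  match n with
  | O => 1
  | n'.+1 => \sum_(e <- succ r pc ps x) e.2 * surv r pc ps E n' e.1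
  end.

(* E[N(s)] = \sum_{n >= 0} P(N(s) > n), in the extended reals. *)
Definition expected_N {R : realType} (r : nat) (pc : R) (ps : nat -> R)
  (s : state) : \bar R :=
  (\sum_(0 <= n <oo) (surv r pc ps (in_E r (block s)) n s)%:E)%E.

Definition pmax {R : realType} (r : nat) (ps : nat -> R) : R :=
  \big[Num.max/0]_(1 <= i < r.+1) ps i.

(* Main.v *)
Require Import Defs.
From mathcomp Require Import all_boot all_order all_algebra.
From mathcomp Require Import all_classical all_reals all_analysis.
From mathcomp Require Import lra.
Import Order.TTheory GRing.Theory Num.Theory.
Local Open Scope ring_scope.

Section Proof.
Variables (R : realType) (r : nat) (pc : R) (ps : nat -> R).
Variable E : state -> bool.

Definition S n x := \sum_(k < n) surv r pc ps E k x.

Lemma S_step n x : S n.+1 x =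
  if E x then 0 else 1 + \sum_(e <- succ r pc ps x) e.2 * S n e.1.
Proof.
rewrite /S big_ord_recl /=.
case: (E x) => /=.
  by rewrite add0r big1.
rewrite (eq_bigr (fun k : 'I_n => \sum_(e <- succ r pc ps x) e.2 * surv r pc ps E k e.1)) //.
rewrite exchange_big /=; congr (_ + _); apply: eq_bigr => e _.
by rewrite mulr_sumr.
Qed.

Definition sig (g : seq nat) : nat := sumn [seq (r - j)%N | j <- g].

Variable u : R.
Definition V (x : state) : R :=
  match x with
  | St i g => 1 + ((r.+1 - i) + sig g)%:R * u
  | Ct i g => 2 + pc * r%:R * u + ((r - i) + sig g)%:R * u
  | Sharp => 1 + (1 + (r + 0)%:R * u)
  | Bot => 0
  end.

Hypothesis u0 : 0 <= u.
Hypothesis pc01 : 0 <= pc <= 1.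

Lemma V_ge0 x : 0 <= V x.
Proof.
have h k : 0 <= k%:R * u by apply: mulr_ge0.
case: pc01 => /andP [? ?].
case: x => [i g|i g||] /=.
- by apply: addr_ge0 => //.
- have := h ((r - i) + sig g)%N.
  have : 0 <= pc * (r%:R * u) by apply: mulr_ge0.
  rewrite mulrA. lra.
- have := h (r + 0)%N. lra.
- by [].
Qed.

Lemma sig_rev b : sig (rev b) = sumn [seq (r - j)%N | j <- b].
Proof. by rewrite /sig map_rev sumn_rev. Qed.

Lemma V_exit b : V (exit_rev r b) <= 1 + (sumn [seq (r - j)%N | j <- b])%:R * u.
Proof.
elim: b => [|j b IH] /=.
  lra.
case: eqP => [->|/eqP jr].
  by rewrite subnn add0n.
by rewrite /= subSS sig_rev.
Qed.

Lemma V_exit_state g : V (exit_state r g) <= 1 + (sig g)%:R * u.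
Proof. by have := V_exit (rev g); rewrite -sig_rev revK. Qed.

Hypothesis key : forall i, (1 <= i <= r)%N -> 1 + ps i * (1 + pc * r%:R * u) <= u.
Hypothesis ps01 : forall i, (1 <= i <= r)%N -> 0 <= ps i <= 1.

Lemma drift x : x <> Bot -> 1 + \sum_(e <- succ r pc ps x) e.2 * V e.1 <= V x.
Proof.
case: pc01 => /andP [pc0 pc1].
case: x => [i g|i g||] hx; last by case: hx.
all: rewrite /=.
- case: ifP => [/andP [/andP [i0 ir] _]|_]; last first.
    rewrite big_nil addr0 lerDl; apply: mulr_ge0 => //.
  have hi : (0 < i <= r)%N by rewrite i0 ir.
  have := key i hi; have /andP [p0 p1] := ps01 i hi.
  have hW : 0 <= ((r - i) + sig g)%:R * u by apply: mulr_ge0.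
  have e1 : (r.+1 - i = (r - i).+1)%N by rewrite subSn.
  case: ifP => ilt; rewrite !big_cons big_nil /= addr0.
  + rewrite subSS e1 addSn.
    have -> : ((r - i + sig g).+1%:R : R) = (r - i + sig g)%:R + 1 by rewrite natr1.
    rewrite [(_ + 1) * u]mulrDl mul1r.
    set Q := pc * _ * u; set W := _%:R * u. nra.
  + have ie : i = r by apply/eqP; rewrite eqn_leq ir leqNgt ilt.
    subst i. rewrite subnn add0n subSn // subnn add1n.
    have hxe := V_exit_state g.
    have : (1 - ps r) * V (exit_state r g) <= (1 - ps r) * (1 + (sig g)%:R * u).
      by apply: ler_wpM2l => //; lra.
    have -> : ((sig g).+1%:R : R) = (sig g)%:R + 1 by rewrite natr1.
    rewrite [(_ + 1) * u]mulrDl mul1r.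
    set Q := pc * _ * u; set W := (sig g)%:R * u; set X := V _. nra.
- case: ifP => [/andP [/andP [i0 ir] _]|_]; last first.
    rewrite big_nil addr0.
    have : 0 <= pc * r%:R * u by rewrite -mulrA; apply: mulr_ge0 => //; apply: mulr_ge0.
    have : 0 <= ((r - i) + sig g)%:R * u by apply: mulr_ge0.
    lra.
  have hr : 0 <= pc * r%:R * u by rewrite -mulrA; apply: mulr_ge0 => //; apply: mulr_ge0.
  have srcons : sig (rcons g i) = (sig g + (r - i))%N.
    by rewrite /sig map_rcons sumn_rcons.
  case: ifP => ilt; rewrite !big_cons big_nil /= addr0 srcons subn1 /=.
  + rewrite subSS.
    rewrite !natrD !mulrDl.
    set A := (r%:R * u); set B := (r - i)%:R * u; set C := (sig g)%:R * u.
    have -> : pc * r%:R * u = pc * A by rewrite mulrA.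
    nra.
  + have hxe := V_exit_state g.
    have : (1 - pc) * V (exit_state r g) <= (1 - pc) * (1 + (sig g)%:R * u).
      by apply: ler_wpM2l => //; lra.
    have ie : i = r by apply/eqP; rewrite eqn_leq ir leqNgt ilt.
    subst i. rewrite subnn !add0n addn0.
    rewrite !natrD !mulrDl.
    set A := (r%:R * u); set C := (sig g)%:R * u; set X := V _.
    have -> : pc * r%:R * u = pc * A by rewrite mulrA.
    nra.
- rewrite !big_cons big_nil /= addr0 mulr0 addr0.
  have := V_ge0 (St 1 [::]); rewrite /= subn1 /= addn0.
  have : 0 <= (r + 0)%:R * u by apply: mulr_ge0.
  rewrite addn0. set Y := r%:R * u. nra.
Qed.

Lemma succ_ge0 x : all (fun e : state * R => 0 <= e.2) (succ r pc ps x).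
Proof.
case: pc01 => /andP [pc0 pc1].
case: x => [i g|i g||] /=.
- case: ifP => [/andP [/andP [i0 ir] _]|_] //.
  have hi : (0 < i <= r)%N by rewrite i0 ir.
  have /andP [p0 p1] := ps01 i hi.
  by case: ifP => _ /=; rewrite p0 subr_ge0 p1.
- case: ifP => [/andP [/andP [i0 ir] _]|_] //.
  by case: ifP => _ /=; rewrite pc0 subr_ge0 pc1.
- by rewrite /= pc0 subr_ge0 pc1.
- by rewrite /= ler01.
Qed.

Lemma sum_le (l : seq (state * R)) (f g : state -> R) :
  all (fun e : state * R => 0 <= e.2) l -> (forall x, f x <= g x) ->
  \sum_(e <- l) e.2 * f e.1 <= \sum_(e <- l) e.2 * g e.1.
Proof.
move=> hl hfg; elim: l hl => [|e l IH] /=; first by rewrite !big_nil.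
move=> /andP [he hl]; rewrite !big_cons; apply: lerD; last exact: IH.
by apply: ler_wpM2l.
Qed.

Lemma sum_ge0 (l : seq (state * R)) (f : state -> R) :
  all (fun e : state * R => 0 <= e.2) l -> (forall x, 0 <= f x) ->
  0 <= \sum_(e <- l) e.2 * f e.1.
Proof.
move=> hl hf; elim: l hl => [|e l IH] /=; first by rewrite !big_nil.
move=> /andP [he hl]; rewrite !big_cons; apply: addr_ge0; last exact: IH.
by apply: mulr_ge0.
Qed.

Hypothesis EBot : E Bot.

Lemma S_le n x : S n x <= V x.
Proof.
elim: n x => [|n IH] x.
  by rewrite /S big_ord0; exact: V_ge0.
rewrite S_step; case: ifP => Ex; first exact: V_ge0.
have xB : x <> Bot by move=> xb; rewrite xb EBot in Ex.
apply: (le_trans _ (drift x xB)); rewrite lerD2l.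
exact: sum_le (succ_ge0 x) IH.
Qed.

Lemma surv_ge0 n x : 0 <= surv r pc ps E n x.
Proof.
elim: n x => [|n IH] x /=; case: (E x) => //.
exact: sum_ge0 (succ_ge0 x) IH.
Qed.

End Proof.

Lemma bigmax_ge_seq (R : realType) (F : nat -> R) (l : seq nat) i : i \in l ->
  F i <= \big[Num.max/0]_(j <- l) F j.
Proof.
elim: l => [|j l IH] //; rewrite inE big_cons => /orP [/eqP ->|h].
  by rewrite le_max lexx.
by rewrite le_max IH ?orbT.
Qed.

Lemma bigmax_ge (R : realType) (F : nat -> R) n i : (1 <= i < n)%N ->
  F i <= \big[Num.max/0]_(1 <= j < n) F j.
Proof. by move=> h; apply: bigmax_ge_seq; rewrite mem_index_iota. Qed.

Lemma pmax_ge (R : realType) r (ps : nat -> R) i : (1 <= i <= r)%N -> ps i <= pmax r ps.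
Proof. by move=> h; apply: bigmax_ge. Qed.

Lemma pmax_ge0 (R : realType) r (ps : nat -> R) : 0 <= pmax r ps.
Proof.
rewrite /pmax; elim/big_rec: _ => // i x _ hx.
by rewrite le_max hx orbT.
Qed.

Theorem lemma3p3 (R : realType) (r : nat) (pc : R) (ps : nat -> R) (s : state) :
  (1 <= r)%N ->
  0 <= pc <= 1 ->
  (forall i, (1 <= i <= r)%N -> 0 <= ps i <= 1) ->
  is_block_state r s ->
  pc < 1 ->
  r%:R * pmax r ps * pc < 1 ->
  (expected_N r pc ps s < +oo)%E.
Proof.
move=> r1 pc01 ps01 _ _ eta1.
set m := pmax r ps in eta1 *.
have m0 : 0 <= m := pmax_ge0 R r ps.
set u := (2 + m) / (1 - r%:R * m * pc).
have den : 0 < 1 - r%:R * m * pc by lra.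
have u0 : 0 <= u by apply: divr_ge0; lra.
have ueq : u * (1 - r%:R * m * pc) = 2 + m by rewrite /u mulrVK // unitfE gt_eqF.
have key : forall i, (1 <= i <= r)%N -> 1 + ps i * (1 + pc * r%:R * u) <= u.
  move=> i hi; have hp := pmax_ge R r ps i hi; rewrite -/m in hp.
  have /andP [p0 p1] := ps01 i hi.
  have hq : 0 <= pc * r%:R * u.
    by case/andP: pc01 => ? ?; rewrite -mulrA; apply: mulr_ge0 => //; apply: mulr_ge0.
  have : ps i * (1 + pc * r%:R * u) <= m * (1 + pc * r%:R * u).
    by apply: ler_wpM2r => //; lra.
  set q := r%:R in ueq hq *. nra.
set E := in_E r (block s).
have EB : E Bot by [].
rewrite /expected_N -/E.
apply: (le_lt_trans (y := (V R r pc u s)%:E)); last exact: ltry.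
apply: lime_le.
  apply: is_cvg_nneseries => n _ _; rewrite lee_fin.
  exact: (surv_ge0 R r pc ps E pc01 ps01).
apply: nearW => n.
rewrite sumEFin lee_fin big_mkord.
exact: (S_le R r pc ps E u u0 pc01 key ps01 EB).
Qed.
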